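(* Let $\mathbb{H}$ be a simple hypergraph of order $n$ with strong independence number $\bar\alpha(\mathbb{H})$. Then for all non-negative integers $h>k$, $$\lambda_{h,k}(\mathbb{H})\le nh+\bar\alpha(\mathbb{H})(k-h)-k.$$
   Context: A set $W\subseteq V$ in a hypergraph $\mathbb{H}=(V,E)$ is strong stable if $|W\cap e|\le 1$ for every $e\in E$; $\bar\alpha(\mathbb{H})$ is the maximum cardinality of a strong stable set. For non-negative integers $h>k$, an $L(h,k)$-colouring of $\mathbb{H}$ is a map $f:V\to\mathbb{Z}_{\ge 0}$ such that $|f(u)-f(v)|\ge h$ whenever $u\ne v$ lie in a common edge, and $|f(u)-f(v)|\ge k$ whenever there are edges $e_1\ni v$, $e_2\ni u$ with $(e_1\cap e_2)\setminus\{u,v\}\ne\emptyset$. The span is $\max f-\min f$; $\lambda_{h,k}(\mathbb{H})$ is the minimum span of an $L(h,k)$-colouring. A hypergraph is simple if no edge contains another and every edge has at least two vertices. *)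

(* Defs.v *)
From Stdlib Require Import ClassicalEpsilon.
From mathcomp Require Import all_boot all_order all_algebra.
Set Implicit Arguments. Unset Strict Implicit. Unset Printing Implicit Defensive.
Import Order.TTheory GRing.Theory Num.Theory.

Definition simple_hypergraph (V : finType) (E : {set {set V}}) : Prop :=
  (forall e1 e2, e1 \in E -> e2 \in E -> e1 \subset e2 -> e1 = e2) /\
  (forall e, e \in E -> 2 <= #|e|).

Definition strong_stable (V : finType) (E : {set {set V}}) (W : {set V}) : bool :=
  [forall e in E, #|W :&: e| <= 1].

Definition alpha_bar (V : finType) (E : {set {set V}}) : nat :=
  \max_(W : {set V} | strong_stable E W) #|W|.

Definition dist (a b : nat) : nat := maxn a b - minn a b.

Definition Lhk_colouring (V : finType) (E : {set {set V}}) (h k : nat)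
  (f : V -> nat) : Prop :=
  (forall u v e, u != v -> e \in E -> u \in e -> v \in e -> h <= dist (f u) (f v)) /\
  (forall u v e1 e2, u != v -> e1 \in E -> e2 \in E -> v \in e1 -> u \in e2 ->
      (e1 :&: e2) :\: [set u; v] != set0 -> k <= dist (f u) (f v)).

Definition span (V : finType) (f : V -> nat) : nat :=
  let M := \max_(v : V) f v in M - \big[minn/M]_(v : V) f v.

Definition decP (P : Prop) : bool :=
  if excluded_middle_informative P then true else false.

Lemma decPP (P : Prop) : reflect P (decP P).
Proof. rewrite /decP; case: excluded_middle_informative => H; by constructor. Qed.

Lemma dist_mul (c a b : nat) : a != b -> c <= dist (c * a) (c * b).
Proof.
wlog ab : a b / a < b.
  move=> W ne; case: (ltngtP a b) => H; first exact: W.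
  - by rewrite /dist maxnC minnC; apply: W; rewrite // eq_sym.
  - by rewrite H eqxx in ne.
move=> _; rewrite /dist.
have le : c * a <= c * b by rewrite leq_mul2l ltnW ?orbT.
rewrite (maxn_idPr le) (minn_idPl le) -mulnBr.
by rewrite -{1}(muln1 c) leq_mul2l subn_gt0 ab orbT.
Qed.

Lemma Lhk_exists_span (V : finType) (E : {set {set V}}) (h k : nat) :
  exists m, decP (exists f, Lhk_colouring E h k f /\ span f = m).
Proof.
pose g := fun v : V => (h + k) * @enum_rank V v.
exists (span g); apply/decPP; exists g; split => //.
have key : forall u v : V, u != v -> h + k <= dist (g u) (g v).
  move=> u v uv; apply: dist_mul.
  by apply: contra uv => /eqP/val_inj/enum_rank_inj ->.
split.
- by move=> u v e uv _ _ _; apply: leq_trans (key u v uv); apply: leq_addr.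
- by move=> u v e1 e2 uv _ _ _ _ _; apply: leq_trans (key u v uv); apply: leq_addl.
Qed.

Definition lambda_hk (V : finType) (E : {set {set V}}) (h k : nat) : nat :=
  ex_minn (Lhk_exists_span E h k).

(* Main.v *)
Require Import Defs.
From mathcomp Require Import all_boot all_order all_algebra.
From mathcomp Require Import zify ring.
Import Order.TTheory GRing.Theory Num.Theory.

Lemma arith (n a h k : nat) : 1 <= a -> a <= n ->
  ((n * h)%:Z + a%:Z * (k%:Z - h%:Z) - k%:Z)%R = Posz ((a - 1) * k + h * (n - a)).
Proof.
case: a => // b _ /subnK <-; rewrite addnK subSS subn0.
move: (n - b.+1) => c.
rewrite !PoszD !PoszM -addn1 !PoszD. ring.
Qed.

Lemma dist_addl c x y : dist (c + x) (c + y) = dist x y.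
Proof. rewrite /dist; lia. Qed.

Lemma dist_sep x y c : x + c <= y -> c <= dist x y.
Proof. rewrite /dist; lia. Qed.

Lemma dist_C x y : dist x y = dist y x.
Proof. rewrite /dist; lia. Qed.

Lemma index_inj_mem (T : eqType) (s : seq T) x y :
  x \in s -> y \in s -> index x s = index y s -> x = y.
Proof. move=> xs ys e; by rewrite -(nth_index x xs) e (nth_index x ys). Qed.

Theorem theorem3p2 (V : finType) (E : {set {set V}}) (h k : nat) :
  0 < #|V| -> simple_hypergraph E -> k < h ->
  ((lambda_hk E h k)%:Z <=
     (#|V| * h)%:Z + (alpha_bar E)%:Z * (k%:Z - h%:Z) - k%:Z)%R.
Proof.
move=> n0 _ kh.
have [W sW aW] : {W : {set V} | strong_stable E W & alpha_bar E = #|W|}.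
  rewrite /alpha_bar.
  have := @eq_bigmax_cond _ (fun W : {set V} => strong_stable E W) (fun W => #|W|).
  case=> [|W Ws ->]; last by exists W.
  apply/card_gt0P; exists set0; rewrite /strong_stable.
  by apply/forallP => e; apply/implyP => _; rewrite set0I cards0.
set a := #|W|.
have a1 : 1 <= a.
  have [v _] : exists v : V, true by move/card_gt0P: n0 => [v _]; exists v.
  have : #|[set v]| <= alpha_bar E.
    apply: (@leq_bigmax_cond _ (fun W : {set V} => strong_stable E W) (fun W => #|W|)).
    apply/forallP => e; apply/implyP => _.
    by rewrite (leq_trans (subset_leq_card (subsetIl _ _))) // cards1.
  by rewrite cards1 aW.
have an : a <= #|V| by apply: max_card.
pose sW' := enum W; pose sR := enum (~: W).
pose f := fun v : V => if v \in W then k * index v sW'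
                       else (a - 1) * k + h * (index v sR).+1.
have iW v : v \in W -> index v sW' < a.
  by move=> vW; rewrite /a cardE index_mem mem_enum.
have iR v : v \notin W -> index v sR < #|V| - a.
  by move=> vW; rewrite /a -(cardsC W) addKn cardE index_mem mem_enum inE.
have fW v : v \in W -> f v <= (a - 1) * k.
  move=> vW; rewrite /f vW; have := iW v vW.
  move=> H; rewrite mulnC leq_mul2r; apply/orP; right; lia.
have fR v : v \notin W -> (a - 1) * k + h <= f v.
  move=> vW; rewrite /f (negbTE vW) leq_add2l; apply: leq_pmulr; done.
have mix u v : u \in W -> v \notin W -> h <= dist (f u) (f v).
  move=> uW vW; apply: dist_sep; have := fW u uW; have := fR v vW; lia.
have ww u v : u \in W -> v \in W -> u != v -> k <= dist (f u) (f v).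
  move=> uW vW uv; rewrite /f uW vW; apply: dist_mul.
  apply: contra uv => /eqP e; apply/eqP.
  by apply: (@index_inj_mem _ sW'); rewrite ?mem_enum.
have rr u v : u \notin W -> v \notin W -> u != v -> h <= dist (f u) (f v).
  move=> uW vW uv; rewrite /f (negbTE uW) (negbTE vW) dist_addl; apply: dist_mul.
  apply: contra uv => /eqP [] e; apply/eqP.
  by apply: (@index_inj_mem _ sR); rewrite ?mem_enum ?inE.
have gen u v : u != v -> k <= dist (f u) (f v).
  move=> uv; case: (boolP (u \in W)) => uW; case: (boolP (v \in W)) => vW.
  - exact: ww.
  - exact: leq_trans (ltnW kh) (mix _ _ uW vW).
  - by rewrite dist_C; apply: leq_trans (ltnW kh) (mix _ _ vW uW).
  - by apply: leq_trans (ltnW kh) (rr _ _ uW vW uv).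
have col : Lhk_colouring E h k f.
  split; last by move=> u v e1 e2 uv *; apply: gen.
  move=> u v e uv eE ue ve.
  case: (boolP (u \in W)) => uW; case: (boolP (v \in W)) => vW.
  - have := forallP sW e; rewrite eE /= => H.
    have : #|[set u; v]| <= #|W :&: e|.
      apply: subset_leq_card; apply/subsetP => x.
      by rewrite !inE => /orP [] /eqP ->; rewrite ?uW ?vW ?ue ?ve.
    rewrite cards2 uv.
    by move=> H2; have := leq_trans H2 H.
  - exact: mix.
  - by rewrite dist_C; apply: mix.
  - exact: rr.
have sp : Defs.span f <= (a - 1) * k + h * (#|V| - a).
  rewrite /Defs.span /= (leq_trans (leq_subr _ _)) //.
  apply/bigmax_leqP => v _; case: (boolP (v \in W)) => vW.
  - by rewrite (leq_trans (fW v vW)) // leq_addr.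
  - rewrite /f (negbTE vW) leq_add2l leq_mul2l; apply/orP; right; exact: iR.
have lam : lambda_hk E h k <= (a - 1) * k + h * (#|V| - a).
  rewrite /lambda_hk; case: ex_minnP => m _ Hm; apply: leq_trans (Hm _ _) sp.
  by apply/decPP; exists f.
rewrite aW -/a.
by rewrite arith // lez_nat.
Qed.
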